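(* In the standing setup with a single fluid, and with $t_{\mathrm b},\xi_{\mathrm b},\xi_0,t_0$ as in the time-interval setup, the duration $\Delta t_{\mathrm b0}=t_0-t_{\mathrm b}$ satisfies $$\Delta t_{\mathrm b0}\ \ge\ \frac{1}{2\sqrt{2\xi_0}}\,\frac{1}{c\,l}\,(\xi_0-\xi_{\mathrm b}).$$
   Context: Standing setup. Fix real constants $c>0$ and $l>0$, a nonempty finite index set $A$, and constants $w_\alpha\in[-1,1]$ for $\alpha\in A$. Let $I\subseteq\mathbb{R}$ be an interval and let $x,y_{\mathrm r},y_{\mathrm i},h,z_\alpha$ ($\alpha\in A$) be real $C^1$ functions of $t\in I$ with $h>0$ and $z_\alpha\ge 0$. Define $\xi(t)=x(t)^2+\sum_{\beta\in A}\frac{1+w_\beta}{2}z_\beta(t)^2$. Assume that on $I$: $\dot x=\big[-x+4c\,y_{\mathrm r}y_{\mathrm i}+x\,\xi\big]h$, $\dot y_{\mathrm r}=\big[\xi\,y_{\mathrm r}-c\,x\,y_{\mathrm i}\big]h$, $\dot y_{\mathrm i}=\big[\xi\,y_{\mathrm i}+c\,x\,y_{\mathrm r}\big]h$, $\dot z_\alpha=\big[-\tfrac{1+w_\alpha}{2}+\xi\big]z_\alpha h$, $\dot h=-\xi h^2$, together with the constraints $x^2+4y_{\mathrm r}^2+\sum_{\beta\in A}z_\beta^2=1$ and $y_{\mathrm r}^2+y_{\mathrm i}^2=\frac{l^2}{2h^2}$. Single fluid: $A$ has exactly one element; write $z$ and $w$ for $z_\alpha$ and $w_\alpha$. Time-interval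 setup: let $t_{\mathrm b}\in I$, $\xi_{\mathrm b}:=\xi(t_{\mathrm b})$, and let $\xi_0$ be a real number with $\xi_0>0$ and $\xi_{\mathrm b}\le\xi_0\le\frac{1+w}{2}$. Assume the set $\{t\in I:\ t\ge t_{\mathrm b},\ \xi(t)=\xi_0\}$ is nonempty and let $t_0$ be its minimum (so $\xi(t)\le\xi_0$ for all $t\in[t_{\mathrm b},t_0]$); put $\Delta t_{\mathrm b0}=t_0-t_{\mathrm b}$. *)

(* Defs.v *)
From Stdlib Require Export Reals.
Open Scope R_scope.

Definition is_interval (I : R -> Prop) : Prop :=
  forall a b c, I a -> I c -> a <= b -> b <= c -> I b.

(* f has derivative d at t relative to I (one-sided at endpoints of I). *)
Definition deriv_within (I : R -> Prop) (f : R -> R) (t d : R) : Prop :=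
  forall eps, 0 < eps -> exists delta, 0 < delta /\
    forall s, I s -> s <> t -> Rabs (s - t) < delta ->
      Rabs ((f s - f t) / (s - t) - d) < eps.

Definition cont_within (I : R -> Prop) (g : R -> R) (t : R) : Prop :=
  forall eps, 0 < eps -> exists delta, 0 < delta /\
    forall s, I s -> Rabs (s - t) < delta -> Rabs (g s - g t) < eps.

Definition C1_on (I : R -> Prop) (f : R -> R) : Prop :=
  exists f' : R -> R,
    (forall t, I t -> deriv_within I f t (f' t)) /\
    (forall t, I t -> cont_within I f' t).

(* Main.v *)
Require Import Defs.
From Stdlib Require Import Reals Lra Psatz.
From Coquelicot Require Import Coquelicot.
Open Scope R_scope.

Lemma deriv_cont I f t d : deriv_within I f t d -> cont_within I f t.
Proof.
  intros Hd eps Heps.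
  destruct (Hd 1 Rlt_0_1) as [del [Hdel Hs]].
  assert (Ha : 0 < Rabs d + 1) by (pose proof (Rabs_pos d); lra).
  exists (Rmin del (eps / (Rabs d + 1))). split.
  { apply Rmin_pos; [lra| apply Rdiv_lt_0_compat; lra]. }
  intros s Is Hst.
  destruct (Req_dec s t) as [->|Hne].
  { replace (f t - f t) with 0 by ring. rewrite Rabs_R0; lra. }
  assert (H1 := Hs s Is Hne (Rlt_le_trans _ _ _ Hst (Rmin_l _ _))).
  assert (H2 := Rlt_le_trans _ _ _ Hst (Rmin_r _ _)).
  set (q := (f s - f t) / (s - t)) in *.
  assert (Hq : f s - f t = q * (s - t)) by (unfold q; field; lra).
  rewrite Hq, Rabs_mult.
  assert (Hq2 : Rabs q < Rabs d + 1).
  { pose proof (Rabs_triang (q - d) d). replace (q - d + d) with q in H by ring. lra. }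
  assert (Hst0 : Rabs (s - t) * (Rabs d + 1) < eps).
  { apply (Rmult_lt_compat_r (Rabs d + 1)) in H2; [|lra].
    replace (eps / (Rabs d + 1) * (Rabs d + 1)) with eps in H2 by (field; lra). exact H2. }
  pose proof (Rabs_pos q). pose proof (Rabs_pos (s - t)). nra.
Qed.


Lemma deriv_interior I f s d r : deriv_within I f s d -> 0 < r ->
  (forall u, Rabs (u - s) < r -> I u) -> derivable_pt_lim f s d.
Proof.
  intros Hd Hr HI eps Heps.
  destruct (Hd eps Heps) as [del [Hdel Hs]].
  assert (Hp : 0 < Rmin del r) by (apply Rmin_pos; lra).
  exists (mkposreal _ Hp). simpl. intros hh Hh Hhl.
  assert (E : s + hh - s = hh) by ring.
  assert (H := Hs (s + hh)). rewrite E in H. apply H.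
  - apply HI. rewrite E. eapply Rlt_le_trans; [exact Hhl| apply Rmin_r].
  - intro Hc. apply Hh. lra.
  - eapply Rlt_le_trans; [exact Hhl| apply Rmin_l].
Qed.

Lemma deriv_ext f g s d r : derivable_pt_lim f s d -> 0 < r ->
  (forall u, Rabs (u - s) < r -> f u = g u) -> derivable_pt_lim g s d.
Proof.
  intros Hd Hr He eps Heps.
  destruct (Hd eps Heps) as [del Hs].
  assert (Hp : 0 < Rmin del r) by (apply Rmin_pos; [apply cond_pos|lra]).
  exists (mkposreal _ Hp). simpl. intros hh Hh Hhl.
  rewrite <- (He (s + hh)), <- (He s).
  - apply Hs; auto. eapply Rlt_le_trans; [exact Hhl| apply Rmin_l].
  - replace (s - s) with 0 by ring. rewrite Rabs_R0; lra.
  - replace (s + hh - s) with hh by ring. eapply Rlt_le_trans; [exact Hhl| apply Rmin_r].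
Qed.

Definition clamp a b t := Rmax a (Rmin t b).

Lemma clamp_prop a b u v : a <= b ->
  Rabs (clamp a b u - clamp a b v) <= Rabs (u - v) /\ a <= clamp a b u <= b
  /\ (a <= u <= b -> clamp a b u = u).
Proof.
  intros Hab. unfold clamp, Rmax, Rmin.
  repeat destruct Rle_dec; repeat split; try lra;
  unfold Rabs; repeat destruct Rcase_abs; lra.
Qed.

Lemma cont_clamp I f a b s : a <= b -> (forall u, a <= u <= b -> I u) ->
  (forall u, a <= u <= b -> cont_within I f u) ->
  continuity_pt (fun t => f (clamp a b t)) s.
Proof.
  intros Hab HI Hc eps Heps.
  destruct (clamp_prop a b s s Hab) as [_ [Hs _]].
  destruct (Hc _ Hs eps Heps) as [del [Hdel Hd]].
  exists del. split; [lra|]. intros t [_ Ht]. simpl in *. unfold R_dist in *.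
  destruct (clamp_prop a b t s Hab) as [Hl [Ht' _]].
  apply Hd; [apply HI; exact Ht'| lra].
Qed.

Lemma bound X Yr Yi H Z k c l xi0 S :
  0 <= k <= 1 -> 0 < c -> 0 < l -> 0 < H ->
  X^2 + k * Z^2 <= xi0 -> xi0 <= k ->
  X^2 + 4 * Yr^2 + Z^2 = 1 -> Yr^2 + Yi^2 = l^2 / (2 * H^2) ->
  S^2 = 2 * xi0 -> 0 <= S ->
  2 * X * ((- X + 4 * c * Yr * Yi + X * (X^2 + k * Z^2)) * H)
  + k * (2 * Z * ((- k + (X^2 + k * Z^2)) * Z * H)) <= 2 * S * c * l.
Proof.
  intros Hk Hc Hl HH Hxi Hxk C1 C2 HS HS0.
  remember (X^2 + k * Z^2) as xi eqn:Hdef.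
  assert (Hxi0 : 0 <= xi) by nra.
  assert (E2 : xi^2 <= X^2 + k^2 * Z^2).
  { assert (xi^2 <= k * xi) by nra. nra. }
  assert (A1 : X^2 <= xi0) by nra.
  assert (A2 : Yr^2 <= 1/4) by nra.
  assert (A3 : (H * Yi)^2 <= l^2 / 2).
  { assert (Ht : (H*Yi)^2 = l^2/2 - H^2 * Yr^2).
    { replace ((H*Yi)^2) with (H^2 * Yi^2) by ring.
      replace (Yi^2) with (l^2/(2*H^2) - Yr^2) by lra. field. lra. }
    nra. }
  assert (P : (4 * H * X * Yr * Yi)^2 <= (S * l)^2).
  { replace ((4 * H * X * Yr * Yi)^2) with (16 * (X^2 * (Yr^2 * (H*Yi)^2))) by ring.
    replace ((S*l)^2) with (16 * (xi0 * (1/4 * (l^2/2)))) by (rewrite Rpow_mult_distr, HS; field).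
    apply Rmult_le_compat_l; [lra|].
    apply Rmult_le_compat; try nra. }

  assert (P2 : 4 * H * X * Yr * Yi <= S * l).
  { destruct (Rle_or_lt (4 * H * X * Yr * Yi) (S * l)) as [Hq|Hq]; [exact Hq|].
    assert (0 <= S * l) by nra. assert ((S*l)^2 < (4 * H * X * Yr * Yi)^2) by nra. lra. }
  assert (E1 : 2 * X * ((- X + 4 * c * Yr * Yi + X * xi) * H)
  + k * (2 * Z * ((- k + xi) * Z * H)) =
   2 * c * (4 * H * X * Yr * Yi) + 2 * H * (xi^2 - X^2 - k^2 * Z^2)).
  { rewrite Hdef. ring. }
  rewrite E1. nra.
Qed.
Theorem lemma2
  (c l w : R) (I : R -> Prop)
  (x yr yi h z : R -> R)
  (tb xi0 t0 : R)
  (Hc : 0 < c) (Hl : 0 < l) (Hw : -1 <= w <= 1)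
  (HI : is_interval I)
  (Cx : C1_on I x) (Cyr : C1_on I yr) (Cyi : C1_on I yi)
  (Ch : C1_on I h) (Cz : C1_on I z)
  (Hh : forall t, I t -> 0 < h t)
  (Hz : forall t, I t -> 0 <= z t)
  (Dx : forall t, I t -> deriv_within I x t
     ((- x t + 4 * c * yr t * yi t + x t * (x t ^ 2 + (1 + w) / 2 * z t ^ 2)) * h t))
  (Dyr : forall t, I t -> deriv_within I yr t
     (((x t ^ 2 + (1 + w) / 2 * z t ^ 2) * yr t - c * x t * yi t) * h t))
  (Dyi : forall t, I t -> deriv_within I yi t
     (((x t ^ 2 + (1 + w) / 2 * z t ^ 2) * yi t + c * x t * yr t) * h t))
  (Dz : forall t, I t -> deriv_within I z t
     ((- ((1 + w) / 2) + (x t ^ 2 + (1 + w) / 2 * z t ^ 2)) * z t * h t))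
  (Dh : forall t, I t -> deriv_within I h t
     (- (x t ^ 2 + (1 + w) / 2 * z t ^ 2) * h t ^ 2))
  (Hcon1 : forall t, I t -> x t ^ 2 + 4 * yr t ^ 2 + z t ^ 2 = 1)
  (Hcon2 : forall t, I t -> yr t ^ 2 + yi t ^ 2 = l ^ 2 / (2 * h t ^ 2))
  (Htb : I tb)
  (Hxi0 : 0 < xi0)
  (Hxib : x tb ^ 2 + (1 + w) / 2 * z tb ^ 2 <= xi0)
  (Hxi0w : xi0 <= (1 + w) / 2)
  (Ht0I : I t0) (Ht0b : tb <= t0)
  (Ht0xi : x t0 ^ 2 + (1 + w) / 2 * z t0 ^ 2 = xi0)
  (Ht0min : forall t, I t -> tb <= t -> x t ^ 2 + (1 + w) / 2 * z t ^ 2 = xi0 -> t0 <= t) :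
  t0 - tb >= 1 / (2 * sqrt (2 * xi0)) * (1 / (c * l))
             * (xi0 - (x tb ^ 2 + (1 + w) / 2 * z tb ^ 2)).
Proof.
  set (k := (1 + w) / 2) in *.
  assert (Hk : 0 <= k <= 1) by (unfold k; lra).
  assert (HIab : forall u, tb <= u <= t0 -> I u).
  { intros u Hu. apply (HI tb u t0); tauto. }
  set (fx := fun t => x (clamp tb t0 t)).
  set (fz := fun t => z (clamp tb t0 t)).
  set (g := fun t => fx t * fx t + k * (fz t * fz t)).
  assert (Hg : forall u, tb <= u <= t0 -> g u = x u ^ 2 + k * z u ^ 2).
  { intros u Hu. unfold g, fx, fz.
    destruct (clamp_prop tb t0 u u Ht0b) as [_ [_ Hcl]]. rewrite Hcl by exact Hu. ring. }
  assert (Hcont : continuity g).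
  { intro s. unfold g, fx, fz.
    apply continuity_pt_plus.
    - apply continuity_pt_mult; apply (cont_clamp I); auto;
        intros u Hu; apply (deriv_cont I x u _ (Dx u (HIab u Hu))).
    - apply continuity_pt_scal. apply continuity_pt_mult; apply (cont_clamp I); auto;
        intros u Hu; apply (deriv_cont I z u _ (Dz u (HIab u Hu))). }
  assert (Hle : forall t, tb <= t <= t0 -> x t ^ 2 + k * z t ^ 2 <= xi0).
  { intros t Ht. destruct (Rle_or_lt (x t ^ 2 + k * z t ^ 2) xi0) as [H|H]; [exact H|].
    exfalso.
    destruct (Req_dec t t0) as [->|Hne]; [lra|].
    destruct (IVT_gen g tb t xi0 Hcont) as [s [Hs Hgs]].
    - rewrite (Hg tb), (Hg t) by lra.
      rewrite Rmin_left, Rmax_right by lra. lra.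
    - rewrite Rmin_left, Rmax_right in Hs by lra.
      rewrite Hg in Hgs by lra.
      assert (t0 <= s) by (apply Ht0min; [apply HIab; lra | lra | exact Hgs]). lra. }
  assert (HS : sqrt (2 * xi0) ^ 2 = 2 * xi0) by (rewrite <- Rsqr_pow2; apply Rsqr_sqrt; lra).
  assert (HS0 : 0 < sqrt (2 * xi0)) by (apply sqrt_lt_R0; lra).
  set (S := sqrt (2 * xi0)) in *.
  set (M := 2 * S * c * l).
  assert (HM : 0 < M) by (unfold M; apply Rmult_lt_0_compat; [nra|lra]).
  set (df := fun t =>
    2 * x t * ((- x t + 4 * c * yr t * yi t + x t * (x t ^ 2 + k * z t ^ 2)) * h t)
  + k * (2 * z t * ((- k + (x t ^ 2 + k * z t ^ 2)) * z t * h t))).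
  assert (Hmv : xi0 - (x tb ^ 2 + k * z tb ^ 2) <= M * (t0 - tb)).
  { destruct (Req_dec tb t0) as [Heq|Hlt].
    - subst t0. rewrite Ht0xi. lra.
    - destruct (MVT_gen g tb t0 df) as [cc [Hcc Heq]].
      + rewrite Rmin_left, Rmax_right by lra. intros s Hs.
        apply is_derive_Reals.
        set (r := Rmin (s - tb) (t0 - s)).
        assert (Hr : 0 < r) by (apply Rmin_pos; lra).
        assert (Hin : forall u, Rabs (u - s) < r -> tb < u < t0).
        { intros u Hu. unfold r in Hu. pose proof (Rmin_l (s - tb) (t0 - s)).
          pose proof (Rmin_r (s - tb) (t0 - s)).
          revert Hu. unfold Rabs. destruct Rcase_abs; intros; lra. }
        assert (HIr : forall u, Rabs (u - s) < r -> I u).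
        { intros u Hu. apply HIab. specialize (Hin u Hu). lra. }
        assert (HIs : I s) by (apply HIab; lra).
        pose proof (deriv_interior _ _ _ _ _ (Dx s HIs) Hr HIr) as Hx.
        pose proof (deriv_interior _ _ _ _ _ (Dz s HIs) Hr HIr) as Hz'.
        pose proof (derivable_pt_lim_plus _ _ _ _ _ (derivable_pt_lim_mult _ _ _ _ _ Hx Hx)
           (derivable_pt_lim_scal _ k _ _ (derivable_pt_lim_mult _ _ _ _ _ Hz' Hz'))) as HD.
        eapply deriv_ext in HD; [| exact Hr |].
        * replace (df s) with (((- x s + 4 * c * yr s * yi s + x s * (x s ^ 2 + k * z s ^ 2)) * h s) * x s +
           x s * ((- x s + 4 * c * yr s * yi s + x s * (x s ^ 2 + k * z s ^ 2)) * h s) +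
           k * ((- k + (x s ^ 2 + k * z s ^ 2)) * z s * h s * z s +
           z s * ((- k + (x s ^ 2 + k * z s ^ 2)) * z s * h s))) by (unfold df; ring).
          exact HD.
        * intros u Hu. specialize (Hin u Hu).
          unfold plus_fct, mult_fct, mult_real_fct, g, fx, fz.
          destruct (clamp_prop tb t0 u u Ht0b) as [_ [_ Hcl]]. rewrite Hcl by lra. reflexivity.
      + intros; apply Hcont.
      + rewrite Rmin_left, Rmax_right in Hcc by lra.
        rewrite (Hg t0), (Hg tb) in Heq by lra.
        fold k in Ht0xi. rewrite Ht0xi in Heq. rewrite Heq.
        assert (Hb : df cc <= M).
        { unfold df, M. apply bound with xi0; first [ lra | (apply Hh, HIab; lra) | (apply Hle; lra)
            | (apply Hcon1, HIab; lra) | (apply Hcon2, HIab; lra) | auto ]. }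
        apply Rmult_le_compat_r; lra. }
  replace (1 / (2 * S) * (1 / (c * l)) * (xi0 - (x tb ^ 2 + k * z tb ^ 2)))
    with ((xi0 - (x tb ^ 2 + k * z tb ^ 2)) / M) by (unfold M; field; lra).
  apply Rle_ge.
  replace (t0 - tb) with (M * (t0 - tb) / M) by (field; lra).
  unfold Rdiv. apply Rmult_le_compat_r; [left; apply Rinv_0_lt_compat; lra | exact Hmv].
Qed.
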